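(* Let $C \subset \mathbb{R}^n$ be convex and closed with nonempty interior, and let $h\colon C\to\mathbb{R}$ be Legendre on $C$, continuous on $C$, and satisfy condition (B): for every sequence $(x_k)_{k\in\mathbb{N}} \subset \mathrm{int}\, C$ and every $y \in C$, if $x_k \to y$ then $D_h(y,x_k) \to 0$. Then the set of extreme points of $C$ is locally finite (every bounded subset of $\mathbb{R}^n$ contains only finitely many extreme points of $C$). In particular, if $C$ is bounded, then $C$ is a polytope.
   Context: A convex function $h \colon C \to \mathbb{R}$ on a convex set $C\subset\mathbb{R}^n$ with nonempty interior is called Legendre if (1) $h$ is continuously differentiable on $\mathrm{int}\, C$ and $\|\nabla h(x)\| \to +\infty$ whenever $x \in \mathrm{int}\, C$ approaches a point of the boundary of $C$; and (2) $h$ is strictly convex on $\mathrm{int}\, C$. The Bregman divergence is $D_h(y,x) = h(y) - h(x) - \langle \nabla h(x), y - x\rangle$ for $y \in C$, $x \in \mathrm{int}\, C$. A polytope is the convex hull of finitely many points. *)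

(* Defs.v *)
From HB Require Import structures.
From mathcomp Require Import all_boot all_order all_algebra.
From mathcomp Require Import all_classical all_reals all_analysis.
Set Implicit Arguments. Unset Strict Implicit. Unset Printing Implicit Defensive.
Import Order.TTheory GRing.Theory Num.Theory.
Import numFieldNormedType.Exports.
Local Open Scope classical_set_scope.
Local Open Scope ring_scope.

Section Defs.
Variables (R : realType) (n : nat).
Notation V := 'rV[R]_n.

Definition convex_set_rV (C : set V) : Prop :=
  forall x y (t : R), C x -> C y -> 0 <= t <= 1 -> C (t *: x + (1 - t) *: y).

Definition inner (u v : V) : R := \sum_(i < n) u ord0 i * v ord0 i.

Definition grad (h : V -> R) (x : V) : V :=
  \row_(i < n) ('d h x (delta_mx ord0 i : V) : R).

Definition bregman (h : V -> R) (y x : V) : R :=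
  h y - h x - inner (grad h x) (y - x).

Definition convex_on (C : set V) (h : V -> R) : Prop :=
  forall x y (t : R), C x -> C y -> 0 <= t <= 1 ->
    h (t *: x + (1 - t) *: y) <= t * h x + (1 - t) * h y.

Definition strictly_convex_on (D : set V) (h : V -> R) : Prop :=
  forall x y (t : R), D x -> D y -> x != y -> 0 < t < 1 ->
    h (t *: x + (1 - t) *: y) < t * h x + (1 - t) * h y.

(* Legendre function on C (h is only relevant on C) *)
Definition legendre (C : set V) (h : V -> R) : Prop :=
  convex_on C h /\
  (forall x, interior C x -> differentiable h x) /\
  {within interior C, continuous (grad h)} /\
  (forall y, (closure C `\` interior C) y ->
     forall M : R, exists2 e : R, 0 < e &
       forall x, interior C x -> `|x - y| < e -> M < `|grad h x|) /\
  strictly_convex_on (interior C) h.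

Definition condB (C : set V) (h : V -> R) : Prop :=
  forall (x_ : nat -> V) (y : V),
    (forall k, interior C (x_ k)) -> C y ->
    x_ @ \oo --> y -> (fun k => bregman h y (x_ k)) @ \oo --> 0.

Definition extreme_point (C : set V) (x : V) : Prop :=
  C x /\ forall y z (t : R), C y -> C z -> 0 < t < 1 ->
    x = t *: y + (1 - t) *: z -> y = x /\ z = x.

Definition conv_hull (k : nat) (p : 'I_k -> V) : set V :=
  \bigcap_(D in [set D | convex_set_rV D /\ forall i, D (p i)]) D.

Definition polytope (C : set V) : Prop :=
  exists k (p : 'I_k -> V), C = conv_hull p.

End Defs.

(* Main.v *)
Require Import Defs.
From HB Require Import structures.
From mathcomp Require Import all_boot all_order all_algebra.
From mathcomp Require Import all_classical all_reals all_analysis.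
From mathcomp Require Import ring lra.
Import Order.TTheory GRing.Theory Num.Theory.
Import numFieldNormedType.Exports.
Local Open Scope classical_set_scope.
Local Open Scope ring_scope.

Section S.
Variables (R : realType) (n : nat).
Local Notation V := 'rV[R]_n.

Lemma interiorP (C : set V) x :
  interior C x <-> exists2 r : R, 0 < r & forall z, `|z - x| < r -> C z.
Proof.
rewrite /interior /=; split.
  move=> H0; have := (@nbhs_normP R V x C) ; case => + _ => /(_ H0) [r r0 H]; exists r => // z zx; apply: H => /=.
  by rewrite distrC.
move=> [r r0 H]; apply/(@nbhs_normP R V x C); exists r => // z /= zx; apply: H.
by rewrite distrC.
Qed.

Lemma innerDr (u v w : V) : inner u (v + w) = inner u v + inner u w.
Proof. by rewrite /inner -big_split; apply: eq_bigr => i _; rewrite mxE mulrDr. Qed.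

Lemma innerZr (u v : V) (a : R) : inner u (a *: v) = a * inner u v.
Proof.
rewrite /inner mulr_sumr; apply: eq_bigr => i _; rewrite mxE.
by rewrite mulrCA.
Qed.

Lemma innerNr (u v : V) : inner u (- v) = - inner u v.
Proof. by rewrite -scaleN1r innerZr mulN1r. Qed.

Lemma innerBr (u v w : V) : inner u (v - w) = inner u v - inner u w.
Proof. by rewrite innerDr innerNr. Qed.

Lemma inner_e (u : V) i : inner u (delta_mx 0 i) = u 0 i.
Proof.
rewrite /inner (bigD1 i) //= big1 ?addr0.
  by rewrite mxE !eqxx mulr1.
by move=> j ji; rewrite mxE (negbTE ji) andbF mulr0.
Qed.

Lemma grad_inner (h : V -> R) x v :
  inner (grad h x) v = 'd h x v.
Proof.
rewrite {2}(row_sum_delta v) linear_sum /inner; apply: eq_bigr => i _.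
by rewrite linearZ /= mxE mulrC.
Qed.


Lemma near_dnbhs0_pos (P : R -> Prop) :
  (\forall t \near (0:R)^', P t) -> exists t : R, 0 < t <= 1 /\ P t.
Proof.
move=> H.
have := (@nbhs_normP R R^o 0 (fun t => t != 0 -> P t)); case => + _ => /(_ H) [r /= r0 Hr].
exists (Num.min (r / 2) 1); split.
  by rewrite lt_min ltr01 divr_gt0 //= ge_min lexx orbT.
apply: Hr; last by rewrite gt_eqF // lt_min ltr01 divr_gt0.
rewrite /= sub0r normrN ger0_norm; last by rewrite le_min ler01 ltW // divr_gt0.
by rewrite gt_min; apply/orP; left; lra.
Qed.

Lemma breg_ge0 (C : set V) h z x : convex_on C h -> C z -> interior C x ->
  differentiable h x -> 0 <= bregman h z x.
Proof.
move=> hc Cz ix dx.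
have Cx : C x by apply: interior_subset.
rewrite /bregman grad_inner.
suff : 'd h x (z - x) <= h z - h x by lra.
rewrite leNgt; apply/negP => lt.
have := diff_derivable (v:=z - x) dx; rewrite /derivable -/(derive h x (z - x)) deriveE //.
move=> /cvgrPdist_lt Hc.
have e0 : 0 < 'd h x (z - x) - (h z - h x) by rewrite subr_gt0.
have /near_dnbhs0_pos [t [/andP[t0 t1]]] := Hc _ e0.
rewrite /= => H.
have := hc z x t Cz Cx; rewrite (ltW t0) t1 => /(_ isT).
have -> : t *: z + (1 - t) *: x = t *: (z - x) + x.
  by apply/rowP => i; rewrite !mxE; ring.
move=> hle.
have hq : t^-1 *: (h (t *: (z - x) + x) - h x) <= h z - h x.
  rewrite [X in X <= _]/GRing.scale /= ler_pdivrMl //; lra.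
move: H; rewrite ltNge => /negP; apply.
apply: le_trans (ler_norm _); lra.
Qed.


Lemma B_unif (C : set V) h y : condB C h -> C y ->
  exists2 d : R, 0 < d & forall x, interior C x -> `|x - y| < d -> bregman h y x < 1.
Proof.
move=> B Cy.
case: (pselect (exists2 d : R, 0 < d & forall x, interior C x -> `|x - y| < d -> bregman h y x < 1)) => // nH.
exfalso.
have H : forall k : nat, exists x, interior C x /\ `|x - y| < k.+1%:R^-1 /\ 1 <= bregman h y x.
  move=> k; apply: contrapT => nk; apply: nH; exists k.+1%:R^-1 => // x ix xy.
  rewrite ltNge; apply/negP => b1; apply: nk; exists x; split => //.
have [f Hf] := choice H.
have cv : f @ \oo --> y.
  apply/cvgrPdist_lt => e e0.
  have := near_infty_natSinv_lt (PosNum e0); apply: filterS => k ke.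
  by rewrite distrC; apply: lt_trans ke; case: (Hf k) => _ [].
have := B f y (fun k => (Hf k).1) Cy cv.
move=> /cvgrPdist_lt /(_ 1 ltr01) /filter_ex [k].
rewrite sub0r normrN => /(le_lt_trans (ler_norm _)).
by case: (Hf k) => _ [_]; rewrite leNgt => /negP.
Qed.


Lemma int_comb (C : set V) c p t : convex_set_rV C -> interior C c -> C p ->
  0 < t <= 1 -> interior C (t *: c + (1 - t) *: p).
Proof.
move=> cC /interiorP [r r0 Hr] Cp /andP[t0 t1].
apply/interiorP; exists (t * r); first by rewrite mulr_gt0.
move=> z zm.
have tn0 : t != 0 by rewrite gt_eqF.
have -> : z = t *: (c + t^-1 *: (z - (t *: c + (1 - t) *: p))) + (1 - t) *: p.
  by apply/rowP => i; rewrite !mxE; field.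
apply: cC => //; last by rewrite (ltW t0) t1.
apply: Hr; rewrite addrC addKr normrZ ger0_norm ?invr_ge0 ?(ltW t0) //.
by rewrite ltr_pdivrMl.
Qed.


Lemma norm_entry (v : V) i : `|v 0 i| <= `|v|.
Proof.
rewrite [leRHS]/Num.Def.normr /= mx_normrE; apply/bigmax_geP; right => /=.
by exists (0, i).
Qed.

Lemma norm_le (v : V) b : 0 <= b -> (forall i, `|v 0 i| <= b) -> `|v| <= b.
Proof.
move=> b0 H; rewrite [leLHS]/Num.Def.normr /= mx_normrE.
apply: bigmax_le => // -[i j] _ /=; rewrite (ord1 i); exact: H.
Qed.


Lemma breg_shift (h : V -> R) (m v x : V) :
  bregman h (m + v) x = bregman h m x + h (m + v) - h m - inner (grad h x) v.
Proof.
rewrite /bregman (_ : m + v - x = (m - x) + v); last by rewrite addrAC.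
rewrite innerDr; ring.
Qed.

Lemma breg_comb (h : V -> R) (y q : V) (th : R) (x : V) :
  bregman h ((1 - th) *: y + th *: q) x =
  (1 - th) * bregman h y x + th * bregman h q x +
  (h ((1 - th) *: y + th *: q) - (1 - th) * h y - th * h q).
Proof.
rewrite /bregman.
have -> : (1 - th) *: y + th *: q - x = (1 - th) *: (y - x) + th *: (q - x).
  by apply/rowP => i; rewrite !mxE; ring.
rewrite (innerDr _ ((1 - th) *: (y - x))) (innerZr _ (y - x)) (innerZr _ (q - x)).
rewrite !innerBr; ring.
Qed.


Lemma lemA (C : set V) (h : V -> R) (y q : V) (th d : R) :
  convex_set_rV C -> legendre C h -> condB C h ->
  C y -> C q -> ~ interior C q -> 0 <= th <= 1 ->
  interior C ((1 - th) *: y + th *: q) ->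
  (forall x, interior C x -> `|x - y| < d -> bregman h y x < 1) ->
  `|q - y| < d -> False.
Proof.
move=> cC [hc [hd [_ [hb _]]]] B Cy Cq nq /andP[th0 th1] im Hy qy.
set m := (1 - th) *: y + th *: q.
have [r r0 Hr] := (interiorP C m).1 im.
pose rho := r / 2.
have rho0 : 0 < rho by rewrite divr_gt0.
pose K0 := h m - (1 - th) * h y - th * h q.
pose b := fun i : 'I_n => `|h (m + rho *: delta_mx 0 i) - h m| +
                          `|h (m + (- rho) *: delta_mx 0 i) - h m|.
pose M := rho^-1 * (1 + `|K0| + \sum_i b i).
have b0 : forall i, 0 <= b i by move=> i; rewrite addr_ge0.
have sb0 : 0 <= \sum_i b i by apply: sumr_ge0 => i _.
have M0 : 0 <= M by rewrite mulr_ge0 ?invr_ge0 ?(ltW rho0) // addr_ge0 // addr_ge0.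
have [e e0 He] := hb q (conj (subset_closure Cq) nq) M.
have [dq dq0 Hq] := B_unif _ _ _ B Cq.
pose eps := Num.min e (Num.min dq (d - `|q - y|)).
have eps0 : 0 < eps by rewrite !lt_min e0 dq0 subr_gt0 qy.
pose s := Num.min 1 (eps / (`|m - q| + 1)).
have mq1 : 0 < `|m - q| + 1 by rewrite ltr_pwDr.
have s0 : 0 < s by rewrite lt_min ltr01 divr_gt0.
have s1 : s <= 1 by rewrite ge_min lexx.
pose x := s *: m + (1 - s) *: q.
have ix : interior C x by apply: int_comb => //; rewrite s0 s1.
have xq : `|x - q| < eps.
  have -> : x - q = s *: (m - q) by apply/rowP => i; rewrite !mxE; ring.
  rewrite normrZ ger0_norm ?(ltW s0) //.
  have : s <= eps / (`|m - q| + 1) by rewrite ge_min lexx orbT.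
  rewrite ler_pdivlMr // => H.
  apply: lt_le_trans H.
  by rewrite mulrDr mulr1 ltrDl s0.
have xqe : `|x - q| < e by apply: lt_le_trans xq _; rewrite ge_min lexx.
have xqd : `|x - q| < dq by apply: lt_le_trans xq _; rewrite !ge_min lexx orbT.
have xqy : `|x - q| < d - `|q - y| by apply: lt_le_trans xq _; rewrite !ge_min lexx !orbT.
have Dy : bregman h y x < 1.
  apply: Hy => //; rewrite (_ : x - y = (x - q) + (q - y)); last by rewrite addrA subrK.
  apply: le_lt_trans (ler_normD _ _) _; lra.
have Dq : bregman h q x < 1 by apply: Hq.
have dx : differentiable h x by apply: hd.
have Dy0 : 0 <= bregman h y x by apply: (breg_ge0 _ _ _ _ hc Cy ix dx).
have Dq0 : 0 <= bregman h q x by apply: (breg_ge0 _ _ _ _ hc Cq ix dx).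
have Dm : bregman h m x <= 1 + K0.
  rewrite /m breg_comb -/m -/K0.
  have : (1 - th) * bregman h y x <= (1 - th) by nra.
  have : th * bregman h q x <= th by nra.
  lra.
have key : forall (a : R) i, `|a| <= rho ->
    a * grad h x 0 i <= 1 + K0 + (h (m + a *: delta_mx 0 i) - h m).
  move=> a i ar.
  have Cz : C (m + a *: delta_mx 0 i).
    apply: Hr; rewrite addrC addKr.
    apply: le_lt_trans (_ : rho < r); last by rewrite /rho; lra.
    apply: norm_le; first exact: ltW.
    move=> j; rewrite !mxE; case: (j == i); rewrite /= ?mulr1 ?mulr0 //.
    by rewrite normr0 ltW.
  have := breg_ge0 _ _ _ _ hc Cz ix dx.
  rewrite breg_shift (innerZr _ (delta_mx 0 i)) inner_e.
  lra.
have : `|grad h x| <= M.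
  apply: norm_le => // i.
  have r1 : `|rho| <= rho by rewrite ger0_norm // ltW.
  have r2 : `|- rho| <= rho by rewrite normrN ger0_norm // ltW.
  have k1 := key _ i r1.
  have k2 := key _ i r2.
  have bi : b i <= \sum_j b j.
    by rewrite (bigD1 i) //= lerDl; apply: sumr_ge0 => j _.
  have hK : K0 <= `|K0| by apply: ler_norm.
  have h1 : h (m + rho *: delta_mx 0 i) - h m <= b i.
    by rewrite /b; apply: le_trans (ler_norm _) _; rewrite lerDl.
  have h2 : h (m + (- rho) *: delta_mx 0 i) - h m <= b i.
    by rewrite /b; apply: le_trans (ler_norm _) _; rewrite lerDr.
  rewrite /M ler_pdivlMl //.
  case: (lerP 0 (grad h x 0 i)) => g0; [rewrite ger0_norm // | rewrite ltr0_norm //]; lra.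
move: (He x ix xqe); rewrite ltNge => /negP; apply.
Qed.


Lemma small_mul (r a : R) : 0 < r -> 0 <= a -> r / (a + 1) * a < r.
Proof.
move=> r0 a0.
have a1 : 0 < a + 1 by rewrite ltr_pwDr.
rewrite mulrAC ltr_pdivrMr // ltr_pM2l //; lra.
Qed.

Lemma exit_pt (C : set V) (a d : V) : closed C -> C a -> ~ C (a + d) ->
  exists tau : R, [/\ 0 <= tau < 1, C (a + tau *: d), ~ interior C (a + tau *: d) &
     forall t, tau < t <= 1 -> ~ C (a + t *: d)].
Proof.
move=> clC Ca nCd.
pose S := [set t : R | 0 <= t <= 1 /\ C (a + t *: d)].
have S0 : S 0 by rewrite /S /= lexx ler01 scale0r addr0.
have ub1 : ubound S 1 by move=> t [/andP[_ ->]].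
have hS : has_sup S by split; [exists 0 | exists 1].
pose tau := sup S.
have tau0 : 0 <= tau := sup_upper_bound hS S0.
have tau1 : tau <= 1 by apply: ge_sup => //; exists 0.
have upb : forall t, 0 <= t <= 1 -> C (a + t *: d) -> t <= tau.
  by move=> t t01 Ct; apply: sup_upper_bound.
have nd0 : 0 <= `|d| by [].
have Ctau : C (a + tau *: d).
  rewrite (closure_id C).1 //.
  move=> B nB; have [r /= r0 Hr] := (@nbhs_normP R V _ B).1 nB.
  have eps0 : 0 < r / (`|d| + 1) by rewrite divr_gt0 // ltr_pwDr.
  have [t [t01 Ct] tt] := sup_adherent eps0 hS.
  exists (a + t *: d); split => //; apply: Hr => /=.
  have tt' : t <= tau by apply: upb.
  have -> : a + tau *: d - (a + t *: d) = (tau - t) *: d.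
    by apply/rowP => i; rewrite !mxE; ring.
  rewrite normrZ ger0_norm ?subr_ge0 //.
  have sm := small_mul _ _ r0 nd0.
  have : (tau - t) * `|d| <= r / (`|d| + 1) * `|d|.
    by apply: ler_wpM2r => //; rewrite -/tau in tt; lra.
  lra.
have taul1 : tau < 1.
  rewrite lt_neqAle tau1 andbT; apply/negP => /eqP e.
  by move: Ctau; rewrite e scale1r.
exists tau; split => //.
- by rewrite tau0 taul1.
- move=> /(interiorP C) [r r0 Hr].
  pose eta := Num.min (1 - tau) (r / (`|d| + 1)).
  have eta0 : 0 < eta by rewrite lt_min subr_gt0 taul1 divr_gt0 // ltr_pwDr.
  have : tau + eta <= tau.
    apply: upb; first by apply/andP; split; [lra | rewrite -lerBrDl ge_min lexx].
    apply: Hr.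
    have -> : a + (tau + eta) *: d - (a + tau *: d) = eta *: d.
      by apply/rowP => i; rewrite !mxE; ring.
    rewrite normrZ ger0_norm ?(ltW eta0) //.
    have sm := small_mul _ _ r0 nd0.
    have : eta * `|d| <= r / (`|d| + 1) * `|d|.
      by apply: ler_wpM2r => //; rewrite ge_min lexx orbT.
    lra.
  lra.
- move=> t /andP[tt t1] Ct.
  have := upb t (ltac:(apply/andP; split; lra)) Ct; lra.
Qed.


Lemma aux_tau (t : R) : 0 <= t -> t < 1 ->
  [/\ 0 <= 1 / (1 + t) <= 1, 0 < (1 - t) / (1 + t) <= 1 & 0 < 1 + t].
Proof.
move=> t0 t1; have t1' : 0 < 1 + t by lra.
split => //; apply/andP; split.
- by rewrite divr_ge0 // ltW.
- by rewrite ler_pdivrMr // mul1r; lra.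
- by rewrite divr_gt0 //; lra.
- by rewrite ler_pdivrMr // mul1r; lra.
Qed.

Lemma aux_norm (t a b d : R) : 0 <= t -> t < 1 -> 0 <= a -> a < d / 2 ->
  0 <= b -> b < d / 2 -> `|1 - t| * a + `|2| * `|t| * b < d.
Proof.
move=> t0 t1 a0 ad b0 bd; rewrite !ger0_norm; [|lra|lra|lra].
have : (1 - t) * a <= (1 - t) * (d / 2) by apply: ler_wpM2l; [lra | exact: ltW].
have : 2 * t * b <= 2 * t * (d / 2) by apply: ler_wpM2l; [lra | exact: ltW].
nra.
Qed.

Lemma local_cone (C : set V) (h : V -> R) y :
  convex_set_rV C -> closed C -> interior C !=set0 -> legendre C h ->
  condB C h -> C y ->
  exists2 rho : R, 0 < rho & forall p, C p -> `|p - y| < rho -> C (p + (p - y)).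
Proof.
move=> cC clC [c0 ic0] hL B Cy.
have [d d0 Hy] := B_unif C h y B Cy.
have d20 : 0 < d / 2 by rewrite divr_gt0.
exists (d / 2) => // p Cp py.
apply: contrapT => nw.
have c1 : 0 < `|c0 - y| + 1 by rewrite ltr_pwDr.
pose tc := Num.min 1 ((d / 2) / (`|c0 - y| + 1)).
have tc0 : 0 < tc by rewrite lt_min ltr01 divr_gt0.
have tc1 : tc <= 1 by rewrite ge_min lexx.
pose c := tc *: c0 + (1 - tc) *: y.
have ic : interior C c by apply: int_comb => //; rewrite tc0 tc1.
have cy : `|c - y| < d / 2.
  have -> : c - y = tc *: (c0 - y) by apply/rowP => i; rewrite !mxE; ring.
  rewrite normrZ ger0_norm ?(ltW tc0) //.
  have sm := small_mul _ _ d20 (normr_ge0 (c0 - y)).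
  have : tc * `|c0 - y| <= d / 2 / (`|c0 - y| + 1) * `|c0 - y|.
    by apply: ler_wpM2r => //; rewrite ge_min lexx orbT.
  lra.
have Cc : C c by apply: interior_subset.
pose w := p + (p - y).
have nCw : ~ C (c + (w - c)) by rewrite addrC subrK.
have [tau [/andP[t0 t1] Cq nq _]] := exit_pt C c (w - c) clC Cc nCw.
pose q := c + tau *: (w - c).
have tau1 : 0 < 1 + tau by case: (aux_tau _ t0 t1).
have tn0 : 1 + tau != 0 by rewrite gt_eqF.
apply: (lemA C h y q (1 / (1 + tau)) d cC hL B Cy Cq nq _ _ Hy _).
- by case: (aux_tau _ t0 t1).
- have -> : (1 - 1 / (1 + tau)) *: y + 1 / (1 + tau) *: q =
      ((1 - tau) / (1 + tau)) *: c + (1 - (1 - tau) / (1 + tau)) *: p.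
    by apply/rowP => i; rewrite /q /w !mxE; field.
  by apply: int_comb => //; case: (aux_tau _ t0 t1).
- have -> : q - y = (1 - tau) *: (c - y) + (2 * tau) *: (p - y).
    by apply/rowP => i; rewrite /q /w !mxE; ring.
  apply: le_lt_trans (ler_normD _ _) _.
  by rewrite !normrZ; apply: aux_norm.
Qed.


Lemma ext_iso (C : set V) (h : V -> R) y :
  convex_set_rV C -> closed C -> interior C !=set0 -> legendre C h ->
  condB C h ->
  exists2 rho : R, 0 < rho & forall p, extreme_point C p -> `|p - y| < rho -> p = y.
Proof.
move=> cC clC iC hL B.
case: (pselect (C y)) => Cy.
  have [rho r0 Hr] := local_cone C h y cC clC iC hL B Cy.
  exists rho => // p [Cp Hp] py.
  have Cw := Hr p Cp py.
  have h2 : 0 < (1 / 2 : R) < 1 by apply/andP; split; lra.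
  have e : p = (1 / 2) *: y + (1 - 1 / 2) *: (p + (p - y)).
    by apply/rowP => i; rewrite !mxE; field.
  by have [-> _] := Hp y _ (1 / 2) Cy Cw h2 e.
have oC : open (~` C) by apply: closed_openC.
have nC : nbhs y (~` C) by apply: open_nbhs_nbhs; split.
have [r /= r0 Hr] := (@nbhs_normP R V y (~` C)).1 nC.
exists r => // p [Cp _] py; exfalso; apply: (Hr p) => //=.
by rewrite distrC.
Qed.


Lemma fin_ext (C : set V) (h : V -> R) (B : set V) :
  convex_set_rV C -> closed C -> interior C !=set0 -> legendre C h ->
  condB C h -> bounded_set B -> finite_set (B `&` extreme_point C).
Proof.
move=> cC clC iC hL HB Bb.
have iso : forall y : V, exists rho : R, 0 < rho /\
    forall p, extreme_point C p -> `|p - y| < rho -> p = y.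
  move=> y; have [rho r0 H] := ext_iso C h y cC clC iC hL HB.
  by exists rho.
have [rho Hrho] := choice iso.
move: Bb => [M [Mreal HM]].
have BM : forall x, B x -> `|x| <= `|M| + 1.
  move=> x Bx; apply: (HM (`|M| + 1)) => //.
  by apply: le_lt_trans (real_ler_norm Mreal) _; rewrite ltrDl.
pose r := `|M| + 2.
have r0 : 0 < r by rewrite /r ltr_pwDr.
pose K := closed_ball (0 : V) r.
have cK : compact K.
  apply: bounded_closed_compact; last exact: closed_ball_closed.
  exists r; split; first by rewrite realE (ltW r0).
  move=> M' rM' x; rewrite /K closed_ballE // /closed_ball_ /= sub0r normrN => xr.
  by apply: le_trans xr _; apply: ltW.
have BK : B `<=` K.
  move=> x Bx; rewrite /K closed_ballE // /closed_ball_ /= sub0r normrN.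
  by apply: le_trans (BM x Bx) _; rewrite lerD2l; lra.
rewrite compact_cover in cK.
have op : forall i, K i -> open (ball i (rho i)) by move=> i _; apply: ball_open.
have cov : K `<=` cover K (fun y => ball y (rho y)).
  by move=> y Ky; exists y => //; apply: ballxx; case: (Hrho y).
have [D' _ HD'] := cK V K (fun y => ball y (rho y)) op cov.
apply: (sub_finite_set _ (finite_fset D')).
move=> p [Bp Ep]; have [y /= D'y] := HD' p (BK p Bp).
rewrite -ball_normE /= => yp.
have [_ H] := Hrho y.
by rewrite (H p Ep) // distrC.
Qed.

End S.

Section S2.
Set Implicit Arguments. Unset Strict Implicit.
Variables (R : realType) (n : nat).
Local Notation V := 'rV[R]_n.

Definition Ldir (C : set V) (x d : V) :=
  exists2 e : R, 0 < e & C (x + e *: d) /\ C (x - e *: d).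

Lemma seg (C : set V) (x d : V) (a b s : R) : convex_set_rV C ->
  C (x + a *: d) -> C (x + b *: d) -> a <= s <= b -> C (x + s *: d).
Proof.
move=> cC Ca Cb /andP[hs1 sb].
case: (eqVneq a b) => [eab|nab].
  by have -> : s = a by subst b; apply/eqP; rewrite eq_le sb hs1.
have ba : 0 < b - a by rewrite subr_gt0 lt_neqAle nab (le_trans hs1 sb).
have bn : b - a != 0 by rewrite gt_eqF.
have -> : x + s *: d = ((s - a) / (b - a)) *: (x + b *: d) +
                       (1 - (s - a) / (b - a)) *: (x + a *: d).
  by apply/rowP => i; rewrite !mxE; field.
apply: cC => //; apply/andP; split.
  by apply: divr_ge0; [rewrite subr_ge0 | apply: ltW].

by rewrite ler_pdivrMr // mul1r; lra.
Qed.

Lemma L0 (C : set V) x : C x -> Ldir C x 0.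
Proof. by move=> Cx; exists 1 => //; rewrite scaler0 addr0 subr0. Qed.

Lemma LZ (C : set V) x d k : C x -> Ldir C x d -> Ldir C x (k *: d).
Proof.
move=> Cx [e e0 [C1 C2]].
case: (ltgtP k 0) => k0.
- exists (e / - k); first by rewrite divr_gt0 // oppr_gt0.
  rewrite !scalerA.
  have -> : e / - k * k = - e by field; rewrite lt_eqF.
  by rewrite scaleNr opprK; split.
- exists (e / k); first by rewrite divr_gt0.
  rewrite !scalerA.
  by have -> : e / k * k = e by field; rewrite gt_eqF.
- by rewrite k0 scale0r; apply: L0.
Qed.

Lemma LD (C : set V) x d1 d2 : convex_set_rV C -> C x ->
  Ldir C x d1 -> Ldir C x d2 -> Ldir C x (d1 + d2).
Proof.
move=> cC Cx [e1 e10 [C11 C12]] [e2 e20 [C21 C22]].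
pose e := Num.min e1 e2 / 2.
have e0 : 0 < e by rewrite divr_gt0 // lt_min e10 e20.
have ee1 : 2 * e <= e1 by rewrite /e mulrC divfK ?ge_min ?lexx // pnatr_eq0.
have ee2 : 2 * e <= e2.
  by rewrite /e mulrC divfK ?ge_min ?lexx ?orbT // pnatr_eq0.
have Cx0 : forall d, C (x + 0 *: d) by move=> d; rewrite scale0r addr0.
have P1 : C (x + (2 * e) *: d1).
  by apply: (seg cC (Cx0 d1) C11); rewrite ee1 mulr_ge0 // ltW.
have P2 : C (x + (2 * e) *: d2).
  by apply: (seg cC (Cx0 d2) C21); rewrite ee2 mulr_ge0 // ltW.
have N1 : C (x + (- (2 * e)) *: d1).
  have C12' : C (x + (- e1) *: d1) by rewrite scaleNr.
  apply: (seg cC C12' (Cx0 d1)); apply/andP; split; [lra | ].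
  by rewrite oppr_le0 mulr_ge0 // ltW.
have N2 : C (x + (- (2 * e)) *: d2).
  have C22' : C (x + (- e2) *: d2) by rewrite scaleNr.
  apply: (seg cC C22' (Cx0 d2)); apply/andP; split; [lra | ].
  by rewrite oppr_le0 mulr_ge0 // ltW.
have h2 : 0 <= (1 / 2 : R) <= 1 by apply/andP; split; lra.
exists e => //; split.
  have -> : x + e *: (d1 + d2) =
     (1 / 2) *: (x + (2 * e) *: d1) + (1 - 1 / 2) *: (x + (2 * e) *: d2).
    by apply/rowP => i; rewrite !mxE; field.
  by apply: cC.
have -> : x - e *: (d1 + d2) =
   (1 / 2) *: (x + (- (2 * e)) *: d1) + (1 - 1 / 2) *: (x + (- (2 * e)) *: d2).
  by apply/rowP => i; rewrite !mxE; field.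
by apply: cC.
Qed.


Lemma Lsum (C : set V) x (I : Type) (r : seq I) (P : pred I) (F : I -> V) :
  convex_set_rV C -> C x -> (forall i, P i -> Ldir C x (F i)) ->
  Ldir C x (\sum_(i <- r | P i) F i).
Proof.
move=> cC Cx HF; apply: (big_ind (Ldir C x)) => //.
- exact: L0.
- by move=> a b; apply: LD.
Qed.

Lemma Lspan (C : set V) x (X : seq V) v : convex_set_rV C -> C x ->
  (forall u, u \in X -> Ldir C x u) -> v \in <<X>>%VS -> Ldir C x v.
Proof.
move=> cC Cx HX vX.
rewrite (@coord_span _ _ _ (in_tuple X) v vX); apply: Lsum => // i _; apply: LZ => //.
by apply: HX; rewrite mem_nth.
Qed.


Lemma bnd (B : set V) : bounded_set B ->
  exists2 M : R, 0 <= M & forall x, B x -> `|x| <= M.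
Proof.
move=> [M [Mreal HM]]; exists (`|M| + 1) => [|x Bx]; first by rewrite addr_ge0.
apply: (HM (`|M| + 1)) => //.
by apply: le_lt_trans (real_ler_norm Mreal) _; rewrite ltrDl.
Qed.

Lemma one_side (C : set V) x d : convex_set_rV C -> closed C -> bounded_set C ->
  C x -> Ldir C x d -> d != 0 ->
  exists2 T : R, 0 < T & C (x + T *: d) /\ ~ Ldir C (x + T *: d) d.
Proof.
move=> cC clC bC Cx [e e0 [Ce _]] dn0.
have [M M0 HM] := bnd bC.
have nd : 0 < `|d| by rewrite normr_gt0.
pose T0 := (M + `|x| + 1) / `|d|.
have T00 : 0 < T0 by rewrite divr_gt0 // ltr_pwDr // addr_ge0.
have nC : ~ C (x + T0 *: d).
  move=> /HM H.
  have : T0 * `|d| <= `|x + T0 *: d| + `|x|.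
    have e1 : `|T0 *: d| = T0 * `|d| by rewrite normrZ ger0_norm // ltW.
    rewrite -e1.
    rewrite {1}(_ : T0 *: d = (x + T0 *: d) - x); last by rewrite addrC addKr.
    exact: ler_normB.
  rewrite /T0 divfK ?gt_eqF //; lra.
have [tau [/andP[t0 t1] Ct _ after]] := @exit_pt R n C x (T0 *: d) clC Cx nC.
have Cx0 : C (x + 0 *: d) by rewrite scale0r addr0.
have etT : forall t, 0 <= t * T0 <= e -> C (x + t *: (T0 *: d)).
  by move=> t tt; rewrite scalerA; apply: (seg cC Cx0 Ce).
have taup : 0 < tau.
  rewrite lt_neqAle t0 andbT; apply/negP => /eqP tz.
  pose t := Num.min 1 (e / T0).
  have tp : 0 < t by rewrite lt_min ltr01 divr_gt0.
  apply: (after t); first by rewrite -tz tp ge_min lexx.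
  apply: etT; rewrite mulr_ge0 ?(ltW tp) ?(ltW T00) //=.
  by rewrite -ler_pdivlMr // ge_min lexx orbT.
exists (tau * T0); first by rewrite mulr_gt0.
rewrite -scalerA; split => // -[e' e'0 [Ce' _]].
pose t := Num.min 1 (tau + e' / T0).
have tt : tau < t by rewrite lt_min t1 ltrDl divr_gt0.
apply: (after t); first by rewrite tt ge_min lexx.
rewrite scalerA.
have Ca : C (x + (tau * T0) *: d) by rewrite -scalerA.
have Cb : C (x + (tau * T0 + e') *: d) by rewrite scalerDl addrA -scalerA.
apply: (seg cC Ca Cb); apply/andP; split.
  by rewrite ler_wpM2r // ltW.
have : t <= tau + e' / T0 by rewrite ge_min lexx orbT.
rewrite -(ler_pM2r T00) mulrDl divfK ?gt_eqF //.
Qed.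


Lemma Ldir_comb (C : set V) x1 z e (lam : R) : convex_set_rV C -> C z ->
  0 < lam <= 1 -> Ldir C x1 e -> Ldir C (lam *: x1 + (1 - lam) *: z) e.
Proof.
move=> cC Cz /andP[l0 l1] [e1 e10 [C1 C2]].
have l01 : 0 <= lam <= 1 by rewrite (ltW l0) l1.
exists (lam * e1); first by rewrite mulr_gt0.
split.
  have -> : lam *: x1 + (1 - lam) *: z + (lam * e1) *: e =
            lam *: (x1 + e1 *: e) + (1 - lam) *: z.
    by apply/rowP => i; rewrite !mxE; ring.
  by apply: cC.
have -> : lam *: x1 + (1 - lam) *: z - (lam * e1) *: e =
          lam *: (x1 - e1 *: e) + (1 - lam) *: z.
  by apply/rowP => i; rewrite !mxE; ring.
by apply: cC.
Qed.

Lemma chord (C : set V) x d : convex_set_rV C -> closed C -> bounded_set C ->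
  C x -> Ldir C x d -> d != 0 ->
  exists x1, exists x2, exists lam : R,
    (0 < lam < 1) /\ x = lam *: x1 + (1 - lam) *: x2 /\ C x1 /\ C x2 /\
    (forall e, Ldir C x1 e -> Ldir C x e) /\ (forall e, Ldir C x2 e -> Ldir C x e) /\
    ~ Ldir C x1 d /\ ~ Ldir C x2 d.
Proof.
move=> cC clC bC Cx Ld dn0.
have [T1 T10 [C1 n1]] := one_side cC clC bC Cx Ld dn0.
have Ld' : Ldir C x (- d) by rewrite -scaleN1r; apply: LZ.
have dn0' : - d != 0 by rewrite oppr_eq0.
have [T2 T20 [C2 n2]] := one_side cC clC bC Cx Ld' dn0'.
pose lam := T2 / (T1 + T2).
have Tn0 : T1 + T2 != 0 by rewrite gt_eqF // addr_gt0.
have l0 : 0 < lam by rewrite divr_gt0 // addr_gt0.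
have l1 : lam < 1 by rewrite ltr_pdivrMr ?addr_gt0 // mul1r ltrDr.
have xe : x = lam *: (x + T1 *: d) + (1 - lam) *: (x + T2 *: - d).
  by apply/rowP => i; rewrite !mxE /lam; field.
exists (x + T1 *: d), (x + T2 *: - d), lam.
split; first by rewrite l0 l1.
split => //; split => //; split => //.
split.
  move=> e He; rewrite xe; apply: Ldir_comb => //.
  by rewrite l0 ltW.
split.
  move=> e He.
  have -> : x = (1 - lam) *: (x + T2 *: - d) + (1 - (1 - lam)) *: (x + T1 *: d).
    by rewrite {1}xe; apply/rowP => i; rewrite !mxE; ring.
  apply: Ldir_comb => //; apply/andP; split; first by rewrite subr_gt0.
  by rewrite lerBlDr lerDl ltW.
split => // H; apply: n2.
by have := LZ (-1) C2 H; rewrite scaleN1r.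
Qed.

Lemma notext (C : set V) x : convex_set_rV C -> C x -> ~ extreme_point C x ->
  exists2 d, d != 0 & Ldir C x d.
Proof.
move=> cC Cx nE; apply: contrapT => nd; apply: nE; split => // y z t Cy Cz.
move=> /andP[t0 t1] ex.
have yx : y = x.
  apply: contrapT => yx; apply: nd; exists (y - x).
    by rewrite subr_eq0; apply/eqP.
  exists (t * (1 - t)); first by rewrite mulr_gt0 // subr_gt0.
  have Cx0 : forall v, C (x + 0 *: v) by move=> v; rewrite scale0r addr0.
  split.
    have Cy1 : C (x + 1 *: (y - x)) by rewrite scale1r addrC subrK.
    apply: (seg cC (Cx0 _) Cy1); apply/andP; split; nra.
  have Cz1 : C (x + 1 *: (z - x)) by rewrite scale1r addrC subrK.
  have -> : x - (t * (1 - t)) *: (y - x) = x + ((1 - t) ^+ 2) *: (z - x).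
    by rewrite ex; apply/rowP => i; rewrite !mxE; ring.
  apply: (seg cC (Cx0 _) Cz1); apply/andP; split; nra.
split => //.
rewrite yx in ex.
apply/rowP => i; have := congr1 (fun v : V => v 0 i) ex; rewrite !mxE => exi.
have tn : 1 - t != 0 by rewrite subr_eq0 gt_eqF.
apply: (mulfI tn); lra.
Qed.

Lemma free_size (X : seq V) : free X -> (size X <= n)%N.
Proof.
rewrite /free => /eqP <-.
have := dimvS (subvf <<X>>%VS); rewrite dimvf dim_matrix.
by rewrite mul1r.
Qed.

Lemma mink (C D : set V) : convex_set_rV C -> closed C -> bounded_set C ->
  convex_set_rV D -> (forall x, extreme_point C x -> D x) -> forall x, C x -> D x.
Proof.
move=> cC clC bC cD HE.
suff H : forall k x, C x -> (forall X : seq V, free X ->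
    (forall v, v \in X -> Ldir C x v) -> (size X <= k)%N) -> D x.
  by move=> x Cx; apply: (H n x Cx) => X fX _; apply: free_size.
elim=> [|k IH] x Cx Hs; (case: (pselect (extreme_point C x)) => [/HE // | nE]);
  have [d dn0 Ld] := notext cC Cx nE.
  have Hd : forall v, v \in [:: d] -> Ldir C x v by move=> v; rewrite inE => /eqP ->.
  by have := Hs [:: d]; rewrite seq1_free dn0 => /(_ isT Hd).
have [x1 [x2 [lam [/andP[l0 l1] [xe [C1 [C2 [H1 [H2 [n1 n2]]]]]]]]]] :=
  chord cC clC bC Cx Ld dn0.
have Hi : forall y, C y -> (forall e, Ldir C y e -> Ldir C x e) -> ~ Ldir C y d -> D y.
  move=> y Cy Hyx nyd; apply: IH => // X fX HX.
  have : (size (d :: X) <= k.+1)%N.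
    apply: Hs.
    - rewrite free_cons fX andbT; apply/negP => dX; apply: nyd.
      exact: (Lspan cC Cy HX dX).
    - move=> v; rewrite inE => /orP[/eqP -> // | vX]; apply: Hyx; exact: HX.
  by [].
rewrite xe; apply: cD; [exact: Hi | exact: Hi | by rewrite (ltW l0) (ltW l1)].
Qed.

End S2.

Theorem proposition1 (R : realType) (n : nat) (C : set 'rV[R]_n) (h : 'rV[R]_n -> R) :
  convex_set_rV C -> closed C -> interior C !=set0 ->
  legendre C h -> {within C, continuous h} -> condB C h ->
  (forall B : set 'rV[R]_n, bounded_set B -> finite_set (B `&` extreme_point C)) /\
  (bounded_set C -> polytope C).
Proof.
move=> cC clC iC hL _ HB.
split; first by move=> B Bb; apply: (@fin_ext R n C h B cC clC iC hL HB Bb).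
move=> bC.
have /finite_fsetP [X HX] := @fin_ext R n C h C cC clC iC hL HB bC.
pose s := finmap.enum_fset X.
pose p := fun i : 'I_(size s) => nth 0 s i.
exists (size s), p.
have memX : forall x, extreme_point C x -> x \in s.
  move=> x Ex; have : (C `&` extreme_point C) x by split => //; case: Ex.
  by rewrite HX => H; exact: H.
have pC : forall i, C (p i).
  move=> i; have : (C `&` extreme_point C) (p i).
    by rewrite HX; exact: (mem_nth 0 (ltn_ord i)).
  by case.
apply/seteqP; split.
- move=> x Cx D [cD pD].
  apply: (mink cC clC bC cD _ Cx) => y Ey.
  have iy : (index y s < size s)%N by rewrite index_mem memX.
  by have := pD (Ordinal iy); rewrite /p /= nth_index ?memX.
- by move=> x Hx; apply: Hx; split.
Qed.
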